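(* Let $\rho_1,\rho_2$ be finite nonempty sets of integers greater than $1$, each consisting of pairwise coprime elements. If $Q_{\rho_1}(x)=Q_{\rho_2}(x)$, then $\rho_1=\rho_2$.
   Context: For a finite nonempty set $\rho=\{r_1,\dots,r_s\}$ of integers with $r_i>1$ and $\gcd(r_i,r_j)=1$ for $i\ne j$, put $n_0=\prod_i r_i$ and define the inclusion-exclusion polynomial $$Q_\rho(x)=\prod_{I\subseteq\{1,\dots,s\}}\left(x^{n_0/\prod_{i\in I}r_i}-1\right)^{(-1)^{|I|}},$$ i.e. $Q_\rho(x)=\frac{(x^{n_0}-1)\prod_{i<j}(x^{n_{ij}}-1)\cdots}{\prod_i(x^{n_i}-1)\prod_{i<j<k}(x^{n_{ijk}}-1)\cdots}$ with $n_i=n_0/r_i$, $n_{ij}=n_0/(r_ir_j)$, etc.; it is a polynomial with integer coefficients. *)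

(* Defs.v *)
From HB Require Import structures.
From mathcomp Require Import all_boot all_order all_algebra.
Unset Printing Implicit Defensive.
Import GRing.Theory.
Local Open Scope ring_scope.

(* A finite set rho = {r_1,...,r_s} of integers is represented by a
   duplicate-free sequence s of naturals (the r_i > 1 are positive). *)

Definition ie_n0 (s : seq nat) : nat := (\prod_(r <- s) r)%N.

Definition ie_dI (s : seq nat) (I : {set 'I_(size s)}) : nat :=
  (\prod_(i in I) nth 0%N s i)%N.

Definition ie_factor (s : seq nat) (I : {set 'I_(size s)}) : {poly rat} :=
  'X^(ie_n0 s %/ ie_dI s I) - 1.

(* factors with exponent (-1)^|I| = +1 *)
Definition ie_num (s : seq nat) : {poly rat} :=
  \prod_(I : {set 'I_(size s)} | ~~ odd #|I|) ie_factor s I.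

(* factors with exponent (-1)^|I| = -1 *)
Definition ie_den (s : seq nat) : {poly rat} :=
  \prod_(I : {set 'I_(size s)} | odd #|I|) ie_factor s I.

(* Inclusion-exclusion polynomial Q_rho = num / den (the division is exact). *)
Definition Qrho (s : seq nat) : {poly rat} := ie_num s %/ ie_den s.

Definition ie_admissible (s : seq nat) : bool :=
  [&& s != [::], uniq s, all (fun r => 1 < r)%N s &
      pairwise coprime s].

(* Main.v *)
Require Import Defs.
From HB Require Import structures.
From mathcomp Require Import all_boot all_order all_algebra.
From mathcomp Require Import cyclotomic ring.

Section Nat.
Variable s : seq nat.
Local Notation k := (size s).
Local Notation F := (fun i : 'I_k => nth 0%N s i).
Local Notation dI := (ie_dI s).

Lemma n0E : ie_n0 s = (\prod_(i < k) F i)%N.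
Proof. by rewrite /ie_n0 (big_nth 0%N) big_mkord. Qed.

Lemma coprime_prodl_list (a : nat) (l : seq 'I_k) :
  (forall i, i \in l -> coprime a (F i)) -> coprime a (\prod_(i <- l) F i)%N.
Proof.
elim: l => [|x l IH] H; first by rewrite big_nil coprimen1.
rewrite big_cons coprimeMr H ?mem_head //= IH // => i il.
by apply: H; rewrite in_cons il orbT.
Qed.

Hypothesis adm : ie_admissible s.

Lemma F_gt1 i : (1 < F i)%N.
Proof.
case/and4P: adm => _ _ /all_nthP H _; exact: H.
Qed.

Lemma F_gt0 i : (0 < F i)%N.
Proof. exact: ltnW (F_gt1 i). Qed.

Lemma F_cop (i j : 'I_k) : i != j -> coprime (F i) (F j).
Proof.
case/and4P: adm => _ _ _ /(pairwiseP 0%N) H ij.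
case: (ltngtP i j) => [lt|lt|/val_inj e]; last by rewrite e eqxx in ij.
- by apply: H; rewrite ?inE.
- by rewrite coprime_sym; apply: H; rewrite ?inE.
Qed.

Lemma dI_dvd_list (l : seq 'I_k) m : uniq l ->
  (forall i, i \in l -> F i %| m) -> (\prod_(i <- l) F i %| m)%N.
Proof.
elim: l => [|x l IH] /= Hu H; first by rewrite big_nil dvd1n.
case/andP: Hu => xl ul.
rewrite big_cons Gauss_dvd ?H ?mem_head //= ?IH // => [i il|].
  by apply: H; rewrite in_cons il orbT.
apply: coprime_prodl_list => i il; apply: F_cop.
by apply: contraNneq xl => ->.
Qed.

Lemma dI_dvdP (I : {set 'I_k}) m :
  (dI I %| m) = [forall i in I, F i %| m].
Proof.
apply/idP/forall_inP => [H i iI|H].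
  apply: dvdn_trans H; rewrite /ie_dI (bigD1 i) //=; exact: dvdn_mulr.
rewrite /ie_dI -big_enum /=; apply: dI_dvd_list; first exact: enum_uniq.
by move=> i; rewrite mem_enum; apply: H.
Qed.

Lemma F_dvd_dI (I : {set 'I_k}) i : i \in I -> F i %| dI I.
Proof. by move=> iI; move: (dvdnn (dI I)); rewrite dI_dvdP => /forall_inP; apply. Qed.

Lemma dI_cop (I : {set 'I_k}) i : i \notin I -> coprime (F i) (dI I).
Proof.
move=> iI; rewrite /ie_dI -big_enum /=; apply: coprime_prodl_list => j.
rewrite mem_enum => jI; apply: F_cop; by apply: contraNneq iI => ->.
Qed.

Lemma n0_gt0 : (0 < ie_n0 s)%N.
Proof. by rewrite n0E prodn_gt0 // => i; apply: F_gt0. Qed.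

Lemma dI_dvd_n0 (I : {set 'I_k}) : dI I %| ie_n0 s.
Proof. by rewrite n0E (bigID (fun i => i \in I)) /= dvdn_mulr. Qed.

Lemma dI_gt0 (I : {set 'I_k}) : (0 < dI I)%N.
Proof. by rewrite /ie_dI prodn_gt0 // => i; apply: F_gt0. Qed.

Lemma dI_inj : injective dI.
Proof.
have sub I J : dI I = dI J -> I \subset J.
  move=> e; apply/subsetP => i iI; apply: contraTT (F_gt1 i) => iJ.
  have := @dI_cop J i iJ; rewrite -e /coprime; move/gcdn_idPl: (@F_dvd_dI I i iI) => -> /eqP ->.
  by [].
by move=> I J e; apply/eqP; rewrite eqEsubset !sub.
Qed.

Definition ex (I : {set 'I_k}) := (ie_n0 s %/ dI I)%N.

Lemma ex_gt0 I : (0 < ex I)%N.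
Proof. by rewrite divn_gt0 ?dI_gt0 // dvdn_leq ?n0_gt0 ?dI_dvd_n0. Qed.

Lemma div_inj n x y : (0 < n)%N -> x %| n -> y %| n -> n %/ x = n %/ y -> x = y.
Proof.
move=> n0 xn yn.
have xp : (0 < x)%N by move: xn; case: x => //; rewrite dvd0n => /eqP e0; rewrite e0 in n0.
have yp : (0 < y)%N by move: yn; case: y => //; rewrite dvd0n => /eqP e0; rewrite e0 in n0.
move=> e; have : (n %/ x * x = n %/ y * y)%N by rewrite !divnK.
rewrite e => /eqP; rewrite eqn_pmul2l; first by move/eqP.
by rewrite -e divn_gt0 // dvdn_leq.
Qed.

Lemma ex_inj : injective ex.
Proof.
move=> I J e; apply: dI_inj; apply: (div_inj _ _ _ n0_gt0) => //; exact: dI_dvd_n0.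
Qed.

End Nat.

Section Part2.
Import GRing.Theory Num.Theory.
Local Open Scope ring_scope.

Definition PA (A : seq nat) : {poly rat} := \prod_(a <- A) ('X^a - 1).

Lemma PA_coef0 A : all (fun a => 0 < a)%N A -> (PA A)`_0 = (-1) ^+ size A.
Proof.
elim: A => [|a A IH] /=; first by rewrite /PA big_nil coef1.
case/andP=> a0 HA; rewrite /PA big_cons coef0M -/(PA A) IH //.
by rewrite coefB coefXn coef1 /= exprS; case: a a0.
Qed.

Lemma PA_coefk A (k : nat) : (0 < k)%N -> all (fun a => k <= a)%N A ->
  (PA A)`_k = (-1) ^+ size A * - (count_mem k A)%:R.
Proof.
move=> k0; elim: A => [|a A IH] /=; first by rewrite /PA big_nil coef1 (gtn_eqF k0) mul1r oppr0.
case/andP=> ka HA; rewrite /PA big_cons -/(PA A) mulrBl mul1r coefB coefXnM IH //.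
have HA0 : all (fun a => 0 < a)%N A.
  by apply/allP => x /(allP HA); apply: leq_trans.
rewrite exprS natrD.
case: (ltngtP k a) ka => // [ka|ka] _.
  by rewrite /= add0r; ring.
by rewrite -ka subnn PA_coef0 //=; ring.
Qed.

Lemma PA_common A B : all (fun a => 0 < a)%N A ->
  all (fun a => 0 < a)%N B -> PA A = PA B -> (A != [::]) || (B != [::]) ->
  exists m, (m \in A) && (m \in B).
Proof.
move=> HA HB e ne.
have : exists m, m \in A ++ B.
  case: A ne {HA e} => [|a A] /=; last by move=> _; exists a; rewrite mem_head.
  by case: B {HB} => // b B _; exists b; rewrite mem_head.
case/ex_minnP => m mAB mmin.
have m0 : (0 < m)%N.
  by move: mAB; rewrite mem_cat => /orP [/(allP HA)|/(allP HB)].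
have mA : all (fun a => m <= a)%N A.
  by apply/allP => x xA; apply: mmin; rewrite mem_cat xA.
have mB : all (fun a => m <= a)%N B.
  by apply/allP => x xB; apply: mmin; rewrite mem_cat xB orbT.
have e0 := congr1 (fun p : {poly rat} => p`_0) e.
have em := congr1 (fun p : {poly rat} => p`_m) e.
rewrite /= !PA_coef0 // in e0.
rewrite /= !PA_coefk // e0 in em.
move/(mulfI (negbT (signr_eq0 _ _)))/oppr_inj/eqP: em; rewrite eqr_nat => /eqP ec.
exists m; move: mAB; rewrite mem_cat -!has_pred1 !has_count ec.
by move/orP => [h|h]; rewrite h.
Qed.

Lemma PA_perm n A B : (size A <= n)%N -> all (fun a => 0 < a)%N A ->
  all (fun a => 0 < a)%N B -> PA A = PA B -> perm_eq A B.
Proof.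
elim: n A B => [|n IH] A B HsA HA HB e.
  move: HsA; rewrite leqn0 size_eq0 => /eqP A0.
  case: B HB e => [|b B] HB e; first by rewrite A0.
  have [m /andP [mA _]] := PA_common _ _ HA HB e (orbT _).
  by rewrite A0 in mA.
have [AB|] := boolP ((A != [::]) || (B != [::])); last first.
  by rewrite negb_or !negbK => /andP [/eqP -> /eqP ->].
have [m /andP [mA mB]] := PA_common _ _ HA HB e AB.
have pA := perm_to_rem mA; have pB := perm_to_rem mB.
apply: (perm_trans pA); rewrite perm_sym; apply: (perm_trans pB).
rewrite perm_cons perm_sym.
have m0 : (0 < m)%N by apply: (allP HA).
have HAr : all (fun a => 0 < a)%N (rem m A).
  by apply/allP => x /mem_rem /(allP HA).
have HBr : all (fun a => 0 < a)%N (rem m B).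
  by apply/allP => x /mem_rem /(allP HB).
apply: IH => //.
  by move: HsA; rewrite size_rem //; case: (size A).
have : PA (m :: rem m A) = PA (m :: rem m B).
  by rewrite /PA -(perm_big _ pA) -(perm_big _ pB).
rewrite /PA !big_cons; apply: mulfI.
by rewrite -size_poly_eq0 size_XnsubC // -lt0n.
Qed.

End Part2.

Lemma toggle_card (T : finType) (Q : pred T) :
  (#|[set I : {set T} | odd #|I| && [forall i in I, Q i]]| <=
   #|[set I : {set T} | ~~ odd #|I| && [forall i in I, Q i]]|)%N.
Proof.
set A := [set I : {set T} | _]; set B := [set I : {set T} | _].
have [A0|[I0 I0A]] := set_0Vmem A; first by rewrite A0 cards0.
move: I0A; rewrite inE => /andP [oI0 /forall_inP QI0].
have : (0 < #|I0|)%N by case: #|I0| oI0.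
rewrite card_gt0 => /set0Pn [j jI0].
pose t (I : {set T}) := if j \in I then I :\ j else j |: I.
have tK : involutive t.
  move=> I; rewrite /t; case: (boolP (j \in I)) => jI.
    by rewrite setD11 setD1K.
  by rewrite setU11 setU1K.
rewrite -(card_imset A (inv_inj tK)); apply: subset_leq_card.
apply/subsetP => _ /imsetP [I IA ->]; move: IA; rewrite !inE => /andP [oI /forall_inP QI].
rewrite /t; case: (boolP (j \in I)) => jI.
  rewrite (cardsD1 j I) jI /= in oI; rewrite oI /=.
  by apply/forall_inP => i; rewrite inE => /andP [_ /QI].
rewrite (cardsU1 j I) jI /= oI /=.
apply/forall_inP => i; rewrite !inE => /orP [/eqP ->|/QI //].
exact: QI0.
Qed.

Lemma sum_bool_card (T : finType) (P b : pred T) :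
  (\sum_(I | P I) (b I : nat))%N = #|[set I | P I && b I]|.
Proof.
rewrite -sum1dep_card big_mkcondr /=; apply: eq_bigr => i _; by case: (b i).
Qed.

Section Part4.
Import GRing.Theory.
Local Open Scope ring_scope.

Definition Ph (d : nat) : {poly rat} := map_poly (intr : int -> rat) ('Phi_d).

Lemma Xn_cyc (n e : nat) : (0 < n)%N -> (0 < e)%N -> (e %| n)%N ->
  ('X^e - 1 : {poly rat}) = \prod_(d <- divisors n) Ph d ^+ (d %| e)%N.
Proof.
move=> n0 e0 en.
have := congr1 (map_poly (intr : int -> rat)) (prod_Cyclotomic e0).
rewrite rmorphB rmorph1 /= map_polyXn rmorph_prod => <-.
rewrite (eq_bigr (fun d => if (d %| e)%N then Ph d else 1)); last first.
  by move=> d _; case: (d %| e)%N.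
rewrite -big_mkcond /= -[X in _ = X]big_filter /Ph; apply: perm_big; apply: uniq_perm.
- exact: divisors_uniq.
- by rewrite filter_uniq // divisors_uniq.
move=> d; rewrite mem_filter -!dvdn_divisors //.
by apply/idP/andP => [de|[]//]; split=> //; apply: dvdn_trans en.
Qed.

Lemma num_cyc (s : seq nat) (adm : ie_admissible s) (P : pred {set 'I_(size s)}) :
  \prod_(I | P I) ('X^(ex s I) - 1) =
  \prod_(d <- divisors (ie_n0 s)) Ph d ^+ (\sum_(I | P I) (d %| ex s I))%N.
Proof.
rewrite (eq_bigr (fun I => \prod_(d <- divisors (ie_n0 s)) Ph d ^+ (d %| ex s I)%N)).
  by rewrite exchange_big /=; apply: eq_bigr => d _; rewrite prodrXr.
move=> I _; apply: Xn_cyc; first exact: n0_gt0.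
  exact: ex_gt0.
apply: dvdn_div; exact: dI_dvd_n0.
Qed.

Lemma den_dvd_num (s : seq nat) : ie_admissible s -> (ie_den s %| ie_num s)%R.
Proof.
move=> adm.
have -> : ie_den s = \prod_(I : {set 'I_(size s)} | odd #|I|) ('X^(ex s I) - 1) by [].
have -> : ie_num s = \prod_(I : {set 'I_(size s)} | ~~ odd #|I|) ('X^(ex s I) - 1) by [].
rewrite !num_cyc // big_seq [X in (_ %| X)%R]big_seq.
apply: (big_ind2 (fun x y => x %| y)%R) => //.
  by move=> x1 x2 y1 y2; apply: dvdp_mul.
move=> d; rewrite -dvdn_divisors ?n0_gt0 // => dn.
apply: dvdp_exp2l.
have key I : (d %| ex s I)%N = [forall i in I, nth 0%N s i %| ie_n0 s %/ d]%N.
  rewrite /ex dvdn_divRL ?dI_dvd_n0 // mulnC -dvdn_divRL //.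
  exact: dI_dvdP.
have E (P : pred {set 'I_(size s)}) :
  (\sum_(I | P I) ((d %| ex s I)%N : nat))%N =
  (\sum_(I | P I) ([forall i in I, nth 0%N s i %| ie_n0 s %/ d]%N : nat))%N.
  by apply: eq_bigr => I _; rewrite key.
rewrite !E.
rewrite !sum_bool_card.
exact: toggle_card.
Qed.

End Part4.

Section Part5.
Import GRing.Theory.

Definition evP (s : seq nat) : {pred {set 'I_(size s)}} := fun I => ~~ odd #|I|.
Definition odP (s : seq nat) : {pred {set 'I_(size s)}} := fun I => odd #|I|.
Definition NE (s : seq nat) := map (ex s) (enum (evP s)).
Definition DE (s : seq nat) := map (ex s) (enum (odP s)).

Lemma numE s : ie_num s = PA (NE s).
Proof. by rewrite /PA /NE big_map big_enum /=. Qed.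
Lemma denE s : ie_den s = PA (DE s).
Proof. by rewrite /PA /DE big_map big_enum /=. Qed.

Lemma memNE s m : (m \in NE s) = [exists I : {set 'I_(size s)}, ~~ odd #|I| && (ex s I == m)].
Proof.
apply/mapP/existsP => [[I IP ->]|[I /andP [IP /eqP <-]]].
  by exists I; rewrite eqxx andbT; rewrite mem_enum in IP.
by exists I; rewrite // mem_enum.
Qed.
Lemma memDE s m : (m \in DE s) = [exists I : {set 'I_(size s)}, odd #|I| && (ex s I == m)].
Proof.
apply/mapP/existsP => [[I IP ->]|[I /andP [IP /eqP <-]]].
  by exists I; rewrite eqxx andbT; rewrite mem_enum in IP.
by exists I; rewrite // mem_enum.
Qed.

Lemma pos_E s : ie_admissible s -> all (fun a => 0 < a)%N (NE s ++ DE s).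
Proof.
move=> adm; apply/allP => x; rewrite mem_cat => /orP [] /mapP [I _ ->]; exact: ex_gt0.
Qed.

Lemma support s1 s2 : ie_admissible s1 ->
  perm_eq (NE s1 ++ DE s2) (NE s2 ++ DE s1) ->
  forall I1 : {set 'I_(size s1)}, exists I2 : {set 'I_(size s2)}, ex s2 I2 = ex s1 I1.
Proof.
move=> adm H I1; have M := perm_mem H.
case: (boolP (odd #|I1|)) => oI.
  have : ex s1 I1 \in NE s2 ++ DE s1 by rewrite mem_cat memDE orbC; apply/orP; left; apply/existsP; exists I1; rewrite oI eqxx.
  rewrite -M mem_cat memNE memDE => /orP [/existsP [J /andP [oJ /eqP e]]|/existsP [J /andP [_ /eqP e]]].
    by move/(ex_inj _ adm): e => e; rewrite e oI in oJ.
  by exists J.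
have : ex s1 I1 \in NE s1 ++ DE s2 by rewrite mem_cat memNE; apply/orP; left; apply/existsP; exists I1; rewrite oI eqxx.
rewrite M mem_cat memNE memDE => /orP [/existsP [J /andP [_ /eqP e]]|/existsP [J /andP [oJ /eqP e]]].
  by exists J.
by move/(ex_inj _ adm): e => e; rewrite e (negbTE oI) in oJ.
Qed.

Lemma dI0 s : ie_dI s set0 = 1%N.
Proof. by rewrite /ie_dI big_set0. Qed.

Lemma n0_eq s1 s2 : ie_admissible s1 -> ie_admissible s2 ->
  (forall I1 : {set 'I_(size s1)}, exists I2 : {set 'I_(size s2)}, ex s2 I2 = ex s1 I1) ->
  (ie_n0 s1 <= ie_n0 s2)%N.
Proof.
move=> a1 a2 H; have [J e] := H set0.
by rewrite /ex dI0 divn1 in e; rewrite -e leq_div.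
Qed.

Lemma atom s1 s2 : ie_admissible s1 -> ie_admissible s2 -> ie_n0 s1 = ie_n0 s2 ->
  (forall I1 : {set 'I_(size s1)}, exists I2 : {set 'I_(size s2)}, ex s2 I2 = ex s1 I1) ->
  forall i : 'I_(size s1), exists J : {set 'I_(size s2)}, nth 0%N s1 i = ie_dI s2 J.
Proof.
move=> a1 a2 en H i; have [J e] := H [set i].
exists J; move: e; rewrite /ex /ie_dI big_set1 en => e.
apply: (div_inj _ _ _ (n0_gt0 _ a2) _ _ (esym e)).
  rewrite -en; have -> : nth 0%N s1 i = ie_dI s1 [set i] by rewrite /ie_dI big_set1.
  exact: dI_dvd_n0.
exact: dI_dvd_n0.
Qed.

Lemma nonempty_of s (J : {set 'I_(size s)}) x : x = ie_dI s J -> (1 < x)%N ->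
  exists j, j \in J.
Proof.
move=> -> lt; have [J0|[j jJ]] := set_0Vmem J; last by exists j.
by rewrite J0 dI0 in lt.
Qed.

Lemma recover s1 s2 : ie_admissible s1 -> ie_admissible s2 -> ie_n0 s1 = ie_n0 s2 ->
  (forall I1 : {set 'I_(size s1)}, exists I2 : {set 'I_(size s2)}, ex s2 I2 = ex s1 I1) ->
  (forall I2 : {set 'I_(size s2)}, exists I1 : {set 'I_(size s1)}, ex s1 I1 = ex s2 I2) ->
  forall r, r \in s1 -> r \in s2.
Proof.
move=> a1 a2 en H12 H21 r /(nthP 0%N) [i0 i0s <-].
pose i := Ordinal i0s.
have [J eJ] := atom _ _ a1 a2 en H12 i.
have [j jJ] := nonempty_of _ _ _ eJ (F_gt1 _ a1 i).
have [K eK] := atom _ _ a2 a1 (esym en) H21 j.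
have [k kK] := nonempty_of _ _ _ eK (F_gt1 _ a2 j).
have d1 : (nth 0%N s2 j %| nth 0%N s1 i)%N by rewrite eJ; exact: (F_dvd_dI _ _).
have d2 : (nth 0%N s1 k %| nth 0%N s2 j)%N by rewrite eK; exact: (F_dvd_dI _ _).
have ki : k = i.
  apply/eqP; apply: contraT => ki.
  have := F_cop _ a1 _ _ ki; rewrite /coprime.
  move/gcdn_idPl: (dvdn_trans d2 d1) => -> /eqP e1.
  by have := F_gt1 _ a1 k; rewrite e1.
rewrite ki in d2.
have -> : nth 0%N s1 i0 = nth 0%N s2 j by apply/eqP; rewrite eqn_dvd d1 d2.
exact: mem_nth.
Qed.

End Part5.

Theorem theorem6p2 (s1 s2 : seq nat) :
  ie_admissible s1 -> ie_admissible s2 ->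
  Qrho s1 = Qrho s2 -> s1 =i s2.
Proof.
move=> a1 a2 eQ.
have e : (ie_num s1 * ie_den s2 = ie_num s2 * ie_den s1)%R.
  rewrite -(divpK (den_dvd_num _ a1)) -(divpK (den_dvd_num _ a2)).
  by rewrite -/(Qrho s1) -/(Qrho s2) eQ GRing.mulrAC.
have P : perm_eq (NE s1 ++ DE s2) (NE s2 ++ DE s1).
  apply: (PA_perm _ _ _ (leqnn _)).
  - have := pos_E _ a1; have := pos_E _ a2; rewrite !all_cat.
    by move=> /andP [_ ->] /andP [-> _].
  - have := pos_E _ a1; have := pos_E _ a2; rewrite !all_cat.
    by move=> /andP [-> _] /andP [_ ->].
  by rewrite /PA !big_cat /= -!/(PA _) -!numE -!denE.
have H12 := support _ _ a1 P.
have P2 : perm_eq (NE s2 ++ DE s1) (NE s1 ++ DE s2) by rewrite perm_sym.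
have H21 := support _ _ a2 P2.
have en : ie_n0 s1 = ie_n0 s2.
  by apply/eqP; rewrite eqn_leq (n0_eq _ _ a1 a2 H12) (n0_eq _ _ a2 a1 H21).
move=> r; apply/idP/idP.
  exact: recover a1 a2 en H12 H21 r.
exact: recover a2 a1 (esym en) H21 H12 r.
Qed.
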